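(* Let $\rho=(a^b)$ be a partition of $n=ab$ with $a\ge 3$ and $b\ge 3$. Define \[ \alpha(\rho)=(a+1,a^{\,b-2},a-1),\quad \beta(\rho)=(a^{\,b-1},a-1,1), \] \[ \gamma_1(\rho)=(a+1,a^{\,b-3},(a-1)^2,1),\quad \gamma_2(\rho)=(a+1,a^{\,b-2},a-2,1) \] (parts reordered into nonincreasing order where necessary). Then $\alpha(\rho),\beta(\rho),\gamma_1(\rho),\gamma_2(\rho)$ form a $4$-clique in $G_n$. In particular, the edge $\alpha(\rho)\beta(\rho)$ is contained in a $3$-simplex of the clique complex $K_n=\mathrm{Cl}(G_n)$.
   Context: The partition graph $G_n$ has as vertices the integer partitions of $n$; two partitions are adjacent if one is obtained from the other by a single elementary unit transfer followed by reordering: decrease one part by $1$ and either increase a different part by $1$ or create a new part equal to $1$, then delete a part that became $0$ and sort in nonincreasing order (the result being different from the original). Exponent notation $a^k$ denotes $k$ parts equal to $a$. The clique complex $\mathrm{Cl}(G_n)$ is the simplicial complex whose simplices are the cliques of $G_n$. *)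

(* Defs.v *)
From mathcomp Require Import all_boot.
Set Implicit Arguments. Unset Strict Implicit. Unset Printing Implicit Defensive.

Definition is_partition (n : nat) (p : seq nat) : bool :=
  [&& sorted geq p, all (fun x => 0 < x) p & sumn p == n].

Definition normalize (s : seq nat) : seq nat := sort geq (filter (fun x => 0 < x) s).

(* One elementary unit transfer: decrease part i by 1, then either increase a
   different part j (< size p) by 1, or (j = size p) create a new part 1;
   incr_nth at index size p appends the new part 1. *)
Definition transfer (p : seq nat) (i j : nat) : seq nat :=
  normalize (incr_nth (set_nth 0 p i (nth 0 p i).-1) j).

Definition adjG (n : nat) (p q : seq nat) : Prop :=
  [/\ is_partition n p, is_partition n q, q <> p &
      exists i j, [/\ i < size p, j <= size p, i <> j & q = transfer p i j]].

(* A clique of G_n (equivalently a simplex of the clique complex Cl(G_n)),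
   given as a duplicate-free list of vertices. *)
Definition is_clique (n : nat) (c : seq (seq nat)) : Prop :=
  [/\ uniq c, all (is_partition n) c &
      forall p q, p \in c -> q \in c -> p <> q -> adjG n p q].

(* Main.v *)
Require Import Defs.
From mathcomp Require Import all_boot zify.

Lemma L1 d (x : nat) r k y : set_nth 0 (nseq d x ++ r) (d + k) y = nseq d x ++ set_nth 0 r k y.
Proof. by elim: d => //= d ->. Qed.
Lemma L2 d (x : nat) r k : incr_nth (nseq d x ++ r) (d + k) = nseq d x ++ incr_nth r k.
Proof. by elim: d => //= d ->. Qed.
Lemma L3 d (x : nat) r k : nth 0 (nseq d x ++ r) (d + k) = nth 0 r k.
Proof. by elim: d. Qed.
Lemma nseqSr d (x : nat) t : nseq d.+1 x ++ t = nseq d x ++ x :: t.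
Proof. by elim: d => //= d ->. Qed.

Lemma path_form d A h t : A <= h -> path geq A t -> path geq h (nseq d A ++ t).
Proof.
elim: d h => [|d IH] h hA pt /=.
  case: t pt => //= x t /andP [hx ->]; rewrite andbT /=; lia.
by rewrite hA /=; apply: IH.
Qed.

Lemma part_form n d A h t : A <= h -> path geq A t -> all (fun x => 0 < x) t -> 0 < A ->
  n = h + A * d + sumn t -> is_partition n (h :: nseq d A ++ t).
Proof.
move=> hA pt pos A0 ->; rewrite /is_partition /= path_form // all_cat pos andbT.
rewrite sumn_cat sumn_nseq (leq_trans A0 hA) /=.
apply/andP; split; last by rewrite addnA.
by elim: d => //= d ->; rewrite A0.
Qed.

Lemma norm_id n X q : is_partition n q -> filter (fun x => 0 < x) X = q -> normalize X = q.
Proof.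
move=> P E; subst q; case/and3P: P => s _ _; rewrite /normalize sorted_sort //.
- by move=> x y z; rewrite /geq /=; lia.
Qed.

Ltac adj i j Pp Pq ne :=
  split; [exact Pp | exact Pq | by move/esym | ];
  exists i, j; split;
   [rewrite /= size_cat size_nseq /=; lia | rewrite /= size_cat size_nseq /=; lia | lia
   | rewrite /transfer /= ?L3 ?L1 /= ?L2 /=; apply: esym; apply: (norm_id _ _ _ Pq); rewrite /= ?filter_cat ?filter_nseq /= ?mul1n //].

Lemma neqf d (A h h' : nat) t t' : (h != h') || (t != t') -> (h :: nseq d A ++ t != h' :: nseq d A ++ t').
Proof. by rewrite eqseq_cons eqseq_cat // eqxx /= negb_and. Qed.

Theorem proposition3p7 (a b : nat) (ha : 3 <= a) (hb : 3 <= b) :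
  let alpha  := a.+1 :: nseq (b - 2) a ++ [:: a - 1] in
  let beta   := nseq (b - 1) a ++ [:: a - 1; 1] in
  let gamma1 := a.+1 :: nseq (b - 3) a ++ [:: a - 1; a - 1; 1] in
  let gamma2 := a.+1 :: nseq (b - 2) a ++ [:: a - 2; 1] in
  is_clique (a * b) [:: alpha; beta; gamma1; gamma2].
Proof.
have [c ->] : exists c, a = c.+3 by exists (a - 3); lia.
have [d ->] : exists d, b = d.+3 by exists (b - 3); lia.
have -> : d.+3 - 2 = d.+1 by lia.
have -> : d.+3 - 1 = d.+2 by lia.
have -> : d.+3 - 3 = d by lia.
have -> : c.+3 - 1 = c.+2 by lia.
have -> : c.+3 - 2 = c.+1 by lia.
cbv zeta. rewrite (_ : nseq d.+2 c.+3 ++ [:: c.+2; 1] = c.+3 :: nseq d c.+3 ++ [:: c.+3; c.+2; 1]); last by rewrite /= -nseqSr.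
rewrite !nseqSr.
have nz : c.+3 * d.+3 = c.+4 + c.+3 * d + sumn [:: c.+3; c.+2] by rewrite /=; nia.
have Pa : is_partition (c.+3 * d.+3) (c.+4 :: nseq d c.+3 ++ [:: c.+3; c.+2]).
  by apply: part_form => //=; nia.
have Pb : is_partition (c.+3 * d.+3) (c.+3 :: nseq d c.+3 ++ [:: c.+3; c.+2; 1]).
  by apply: part_form => //=; nia.
have P1 : is_partition (c.+3 * d.+3) (c.+4 :: nseq d c.+3 ++ [:: c.+2; c.+2; 1]).
  by apply: part_form => //=; nia.
have P2 : is_partition (c.+3 * d.+3) (c.+4 :: nseq d c.+3 ++ [:: c.+3; c.+1; 1]).
  by apply: part_form => //=; nia.
split.
- rewrite /= !inE !negb_or !neqf //=; rewrite !eqseq_cons /=; lia.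
- by apply/allP => x; rewrite !inE => /or4P [] /eqP ->.
move=> p q; rewrite !inE => /or4P [] /eqP -> /or4P [] /eqP -> // ne; try by case: ne.
- adj 0 (d+2).+1 Pa Pb ne.
- adj (d+0).+1 (d+2).+1 Pa P1 ne.
- adj (d+1).+1 (d+2).+1 Pa P2 ne.
- adj (d+2).+1 0 Pb Pa ne.
- adj (d+0).+1 0 Pb P1 ne.
- adj (d+1).+1 0 Pb P2 ne.
- adj (d+2).+1 (d+0).+1 P1 Pa ne.
- adj 0 (d+0).+1 P1 Pb ne.
- adj (d+1).+1 (d+0).+1 P1 P2 ne.
- adj (d+2).+1 (d+1).+1 P2 Pa ne.
- adj 0 (d+1).+1 P2 Pb ne.
- adj (d+0).+1 (d+1).+1 P2 P1 ne.
Qed.
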